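(* Let $\alpha>0$ and $\lambda\in\mathbb C$ with $\operatorname{Re}\lambda>-1$ and $\lambda\notin\{0,1\}$. Then the hypergeometric equation $$z(1-z)\psi''+\big((\lambda-\sqrt{1+\alpha})-2\lambda z\big)\psi'-\lambda(\lambda-1)\psi=0$$ has no nontrivial solution $\psi\in C^\infty[0,1]$ (equivalently, with $y'=2z-1$, the equation $(\lambda^2-\lambda)\psi+(2\lambda y'+2\sqrt{1+\alpha})\psi'+(y'^2-1)\psi''=0$ has no nontrivial solution in $C^\infty[-1,1]$). As a consequence, the equation $$(\lambda^2+\lambda)\varphi+\Big((2\lambda+2)y+\frac{2\alpha}{\sqrt{1+\alpha}+y}\Big)\varphi'+(y^2-1)\varphi''=0$$ has no nontrivial solution $\varphi\in C^\infty[-1,1]$ when $\operatorname{Re}\lambda>-1$ and $\lambda\notin\{0,1\}$. *)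

(* Defs.v *)
From Stdlib Require Import Reals.
From Coquelicot Require Import Coquelicot.
Open Scope R_scope.

Definition deriv_within (a b : R) (f g : R -> C) : Prop :=
  forall x, a <= x <= b ->
    forall eps, 0 < eps -> exists delta, 0 < delta /\
      forall h, h <> 0 -> a <= x + h <= b -> Rabs h < delta ->
        Cmod (Cminus (Cdiv (Cminus (f (x + h)) (f x)) (RtoC h)) (g x)) < eps.

Definition deriv_tower (a b : R) (D : nat -> R -> C) : Prop :=
  forall n, deriv_within a b (D n) (D (S n)).

Definition smooth_on_with (a b : R) (f : R -> C) (D : nat -> R -> C) : Prop :=
  (forall x, a <= x <= b -> D O x = f x) /\ deriv_tower a b D.

(* Main.v *)
Require Import Defs.
From Stdlib Require Import Reals Lra Psatz List.
From Coquelicot Require Import Coquelicot.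
Open Scope R_scope.

Lemma c_eq (x y : C) : fst x = fst y -> snd x = snd y -> x = y.
Proof. destruct x, y; simpl; intros; subst; auto. Qed.
Ltac csimpl := unfold Cminus, Cplus, Cmult, Copp, RtoC, Cdiv, Cinv in *; simpl in *.

Definition lim0 (P : R -> Prop) (F : R -> C) (L : C) :=
  forall eps, 0 < eps -> exists d, 0 < d /\
    forall h, P h -> Rabs h < d -> Cmod (Cminus (F h) L) < eps.

Lemma Cmod_le_sum (z : C) : Cmod z <= Rabs (fst z) + Rabs (snd z).
Proof.
  unfold Cmod. rewrite <- (sqrt_square (Rabs (fst z) + Rabs (snd z))).
  2:{ generalize (Rabs_pos (fst z)) (Rabs_pos (snd z)); lra. }
  apply sqrt_le_1_alt.
  assert (H1: (fst z)^2 = Rabs (fst z) * Rabs (fst z)).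
  { rewrite <- Rabs_mult. rewrite Rabs_right. ring. nra. }
  assert (H2: (snd z)^2 = Rabs (snd z) * Rabs (snd z)).
  { rewrite <- Rabs_mult. rewrite Rabs_right. ring. nra. }
  rewrite H1, H2. generalize (Rabs_pos (fst z)) (Rabs_pos (snd z)); nra.
Qed.

Lemma fst_le_Cmod (z : C) : Rabs (fst z) <= Cmod z.
Proof. generalize (Rmax_Cmod z). generalize (Rmax_l (Rabs (fst z)) (Rabs (snd z))). lra. Qed.
Lemma snd_le_Cmod (z : C) : Rabs (snd z) <= Cmod z.
Proof. generalize (Rmax_Cmod z). generalize (Rmax_r (Rabs (fst z)) (Rabs (snd z))). lra. Qed.

Lemma lim0_ext P F G L : (forall h, P h -> F h = G h) -> lim0 P F L -> lim0 P G L.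
Proof.
  intros E H eps He. destruct (H eps He) as [d [Hd H']]. exists d; split; auto.
  intros h Ph Hh. rewrite <- E; auto.
Qed.

Lemma lim0_const P c : lim0 P (fun _ => c) c.
Proof.
  intros eps He. exists 1; split; [lra|]. intros. replace (Cminus c c) with (RtoC 0) by ring.
  rewrite Cmod_0; auto.
Qed.

Lemma lim0_plus P F G a b : lim0 P F a -> lim0 P G b -> lim0 P (fun h => Cplus (F h) (G h)) (Cplus a b).
Proof.
  intros HF HG eps He.
  destruct (HF (eps/2)) as [d1 [Hd1 H1]]; [lra|].
  destruct (HG (eps/2)) as [d2 [Hd2 H2]]; [lra|].
  exists (Rmin d1 d2); split; [apply Rmin_glb_lt; auto|].
  intros h Ph Hh.
  replace (Cminus (Cplus (F h) (G h)) (Cplus a b)) with (Cplus (Cminus (F h) a) (Cminus (G h) b)) by ring.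
  eapply Rle_lt_trans; [apply Cmod_triangle|].
  assert (Rabs h < d1) by (eapply Rlt_le_trans; [apply Hh| apply Rmin_l]).
  assert (Rabs h < d2) by (eapply Rlt_le_trans; [apply Hh| apply Rmin_r]).
  specialize (H1 h Ph H). specialize (H2 h Ph H0). lra.
Qed.

Lemma lim0_mult P F G a b : lim0 P F a -> lim0 P G b -> lim0 P (fun h => Cmult (F h) (G h)) (Cmult a b).
Proof.
  intros HF HG eps He.
  set (K := 2 + Cmod a + Cmod b).
  assert (HK : 0 < K) by (unfold K; generalize (Cmod_ge_0 a) (Cmod_ge_0 b); lra).
  set (e1 := Rmin 1 (eps / K)).
  assert (He1 : 0 < e1) by (apply Rmin_glb_lt; [lra| apply Rdiv_lt_0_compat; auto]).
  assert (He1a : e1 <= 1) by apply Rmin_l.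
  assert (He1b : e1 * K <= eps).
  { assert (e1 <= eps / K) by apply Rmin_r.
    apply Rmult_le_compat_r with (r := K) in H; [|lra].
    unfold Rdiv in H. rewrite Rmult_assoc, Rinv_l in H; lra. }
  destruct (HF e1 He1) as [d1 [Hd1 H1]].
  destruct (HG e1 He1) as [d2 [Hd2 H2]].
  exists (Rmin d1 d2); split; [apply Rmin_glb_lt; auto|].
  intros h Ph Hh.
  assert (Rabs h < d1) by (eapply Rlt_le_trans; [apply Hh| apply Rmin_l]).
  assert (Rabs h < d2) by (eapply Rlt_le_trans; [apply Hh| apply Rmin_r]).
  specialize (H1 h Ph H). specialize (H2 h Ph H0).
  replace (Cminus (Cmult (F h) (G h)) (Cmult a b)) with
     (Cplus (Cmult (Cminus (F h) a) (Cplus (Cminus (G h) b) b)) (Cmult a (Cminus (G h) b))) by ring.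
  eapply Rle_lt_trans; [apply Cmod_triangle|].
  rewrite !Cmod_mult.
  assert (Cmod (Cplus (Cminus (G h) b) b) <= e1 + Cmod b).
  { eapply Rle_trans; [apply Cmod_triangle|]. lra. }
  generalize (Cmod_ge_0 (Cminus (F h) a)) (Cmod_ge_0 a) (Cmod_ge_0 (Cminus (G h) b)) (Cmod_ge_0 b)
    (Cmod_ge_0 (Cplus (Cminus (G h) b) b)).
  intros. unfold K in *.
  assert (Cmod (Cminus (F h) a) * Cmod (Cplus (Cminus (G h) b) b) <= e1 * (e1 + Cmod b)).
  { apply Rmult_le_compat; lra. }
  assert (Cmod a * Cmod (Cminus (G h) b) <= Cmod a * e1) by (apply Rmult_le_compat_l; lra).
  nra.
Qed.

Lemma lim0_comp P Q F K L : lim0 P F L -> (forall h, Q h -> P (K h)) ->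
  (forall e, 0 < e -> exists d, 0 < d /\ forall h, Q h -> Rabs h < d -> Rabs (K h) < e) ->
  lim0 Q (fun h => F (K h)) L.
Proof.
  intros HF HPQ HK eps He. destruct (HF eps He) as [d [Hd H]].
  destruct (HK d Hd) as [d' [Hd' H']]. exists d'; split; auto.
Qed.

Lemma lim0_RtoC P f l : (forall eps, 0 < eps -> exists d, 0 < d /\ forall h, P h -> Rabs h < d -> Rabs (f h - l) < eps) ->
  lim0 P (fun h => RtoC (f h)) (RtoC l).
Proof.
  intros H eps He. destruct (H eps He) as [d [Hd H']]. exists d; split; auto.
  intros. replace (Cminus (RtoC (f h)) (RtoC l)) with (RtoC (f h - l)) by (apply c_eq; csimpl; ring).
  rewrite Cmod_R; auto.
Qed.

Definition dom (a b x : R) := fun h => h <> 0 /\ a <= x + h <= b.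
Definition quo (f : R -> C) x := fun h => Cdiv (Cminus (f (x + h)) (f x)) (RtoC h).

Lemma dw_lim a b f g : deriv_within a b f g <-> forall x, a <= x <= b -> lim0 (dom a b x) (quo f x) (g x).
Proof.
  split.
  - intros H x Hx eps He. destruct (H x Hx eps He) as [d [Hd H']]. exists d; split; auto.
    intros h [Hh1 Hh2] Hh. apply H'; auto.
  - intros H x Hx eps He. destruct (H x Hx eps He) as [d [Hd H']]. exists d; split; auto.
    intros h Hh1 Hh2 Hh. apply (H' h); auto. split; auto.
Qed.

Lemma RtoC_neq0 h : h <> 0 -> RtoC h <> RtoC 0.
Proof. intros H E. apply H. injection E; auto. Qed.

Lemma dw_cont a b f g x : a <= x <= b -> lim0 (dom a b x) (quo f x) (g x) ->
  lim0 (dom a b x) (fun h => f (x + h)) (f x).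
Proof.
  intros Hx H.
  assert (H2 : lim0 (dom a b x) (fun h => Cplus (Cmult (quo f x h) (RtoC h)) (f x)) (Cplus (Cmult (g x) (RtoC 0)) (f x))).
  { apply lim0_plus; [apply lim0_mult; auto|apply lim0_const].
    apply lim0_RtoC. intros eps He. exists eps; split; auto. intros. rewrite Rminus_0_r; auto. }
  replace (Cplus (Cmult (g x) (RtoC 0)) (f x)) with (f x) in H2 by ring.
  eapply lim0_ext; [|apply H2]. intros h [Hh _]. unfold quo. field. apply RtoC_neq0; auto.
Qed.

Lemma dw_plus a b f1 g1 f2 g2 : deriv_within a b f1 g1 -> deriv_within a b f2 g2 ->
  deriv_within a b (fun x => Cplus (f1 x) (f2 x)) (fun x => Cplus (g1 x) (g2 x)).
Proof.
  rewrite !dw_lim. intros H1 H2 x Hx.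
  eapply lim0_ext; [|apply lim0_plus; [apply H1|apply H2]; auto].
  intros h [Hh _]. unfold quo. field. apply RtoC_neq0; auto.
Qed.

Lemma dw_mult a b f1 g1 f2 g2 : deriv_within a b f1 g1 -> deriv_within a b f2 g2 ->
  deriv_within a b (fun x => Cmult (f1 x) (f2 x)) (fun x => Cplus (Cmult (g1 x) (f2 x)) (Cmult (f1 x) (g2 x))).
Proof.
  rewrite !dw_lim. intros H1 H2 x Hx.
  assert (C2 := dw_cont _ _ _ _ _ Hx (H2 x Hx)).
  eapply lim0_ext; [|apply lim0_plus; [apply lim0_mult; [apply H1; auto| apply C2] | apply lim0_mult; [apply lim0_const|apply H2; auto]]].
  intros h [Hh _]. unfold quo. field. apply RtoC_neq0; auto.
Qed.

Lemma dw_const a b c : deriv_within a b (fun _ => c) (fun _ => RtoC 0).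
Proof.
  rewrite dw_lim. intros x Hx. eapply lim0_ext; [|apply lim0_const].
  intros h [Hh _]. unfold quo. field. apply RtoC_neq0; auto.
Qed.

Lemma dw_id a b : deriv_within a b (fun x => RtoC x) (fun _ => RtoC 1).
Proof.
  rewrite dw_lim. intros x Hx. eapply lim0_ext; [|apply lim0_const].
  intros h [Hh _]. unfold quo. apply c_eq; csimpl; field; auto.
Qed.

Lemma dw_ext a b f1 f2 g1 g2 : (forall x, a <= x <= b -> f1 x = f2 x) -> (forall x, a <= x <= b -> g1 x = g2 x) ->
  deriv_within a b f1 g1 -> deriv_within a b f2 g2.
Proof.
  rewrite !dw_lim. intros Ef Eg H x Hx. rewrite <- Eg; auto.
  eapply lim0_ext; [|apply H; auto]. intros h [Hh Hh2]. unfold quo. rewrite !Ef; auto.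
Qed.

Lemma dw_zero a b f g : a < b -> deriv_within a b f g -> (forall x, a <= x <= b -> f x = RtoC 0) ->
  forall x, a <= x <= b -> g x = RtoC 0.
Proof.
  intros Hab H Hf x Hx. apply Cmod_eq_0.
  apply Rle_antisym; [|apply Cmod_ge_0].
  apply Rnot_lt_le. intro Hp.
  destruct (H x Hx _ Hp) as [d [Hd H']].
  set (k := Rmin (d/2) ((b-a)/2)).
  assert (Hk : 0 < k) by (apply Rmin_glb_lt; lra).
  assert (Hk1 : k <= d/2) by apply Rmin_l. assert (Hk2 : k <= (b-a)/2) by apply Rmin_r.
  destruct (Rle_lt_dec x ((a+b)/2)).
  - specialize (H' k). rewrite !Hf in H' by lra.
    replace (Cminus (Cdiv (Cminus (RtoC 0) (RtoC 0)) (RtoC k)) (g x)) with (Copp (g x)) in H'.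
    2:{ field. apply RtoC_neq0; lra. }
    rewrite Cmod_opp in H'. assert (Cmod (g x) < Cmod (g x)); [|lra].
    apply H'; [lra|lra|rewrite Rabs_right; lra].
  - specialize (H' (-k)). rewrite !Hf in H' by lra.
    replace (Cminus (Cdiv (Cminus (RtoC 0) (RtoC 0)) (RtoC (-k))) (g x)) with (Copp (g x)) in H'.
    2:{ field. apply RtoC_neq0; lra. }
    rewrite Cmod_opp in H'. assert (Cmod (g x) < Cmod (g x)); [|lra].
    apply H'; [lra|lra|rewrite Rabs_left; lra].
Qed.

Lemma quo_fst u v w h : h <> 0 -> fst (Cminus (Cdiv (Cminus u v) (RtoC h)) w) = (fst u - fst v)/h - fst w.
Proof. intros. destruct u, v, w. csimpl. field. auto. Qed.
Lemma quo_snd u v w h : h <> 0 -> snd (Cminus (Cdiv (Cminus u v) (RtoC h)) w) = (snd u - snd v)/h - snd w.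
Proof. intros. destruct u, v, w. csimpl. field. auto. Qed.

Lemma dw_full a b (f g : R -> C) : (forall x, a <= x <= b -> is_derive (fun t => fst (f t)) x (fst (g x)) /\ is_derive (fun t => snd (f t)) x (snd (g x))) -> deriv_within a b f g.
Proof.
  intros H x Hx eps He. destruct (H x Hx) as [H1 H2].
  apply is_derive_Reals in H1. apply is_derive_Reals in H2.
  destruct (H1 (eps/2)) as [d1 Hd1]; [lra|]. destruct (H2 (eps/2)) as [d2 Hd2]; [lra|].
  exists (Rmin d1 d2). split; [apply Rmin_glb_lt; apply cond_pos|].
  intros h Hh Hxh Hhd.
  assert (Rabs h < d1) by (eapply Rlt_le_trans; [apply Hhd| apply Rmin_l]).
  assert (Rabs h < d2) by (eapply Rlt_le_trans; [apply Hhd| apply Rmin_r]).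
  specialize (Hd1 h Hh H0). specialize (Hd2 h Hh H3).
  eapply Rle_lt_trans; [apply Cmod_le_sum|]. rewrite quo_fst, quo_snd by auto. cbv beta in Hd1, Hd2. lra.
Qed.

Lemma dw_re a b (f g : R -> C) x : deriv_within a b f g -> a < x < b ->
  is_derive (fun t => fst (f t)) x (fst (g x)) /\ is_derive (fun t => snd (f t)) x (snd (g x)).
Proof.
  intros H Hx. split; apply is_derive_Reals; intros eps He;
  destruct (H x (conj (Rlt_le _ _ (proj1 Hx)) (Rlt_le _ _ (proj2 Hx))) eps He) as [d [Hd H']];
  assert (Hp : 0 < Rmin d (Rmin (x - a) (b - x))) by (repeat apply Rmin_glb_lt; lra);
  exists (mkposreal _ Hp); intros h Hh Hhd; simpl in Hhd;
  assert (Rabs h < d) by (eapply Rlt_le_trans; [apply Hhd| apply Rmin_l]);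
  assert (Rabs h < Rmin (x-a) (b-x)) by (eapply Rlt_le_trans; [apply Hhd| apply Rmin_r]);
  assert (Rabs h < x - a) by (eapply Rlt_le_trans; [apply H1| apply Rmin_l]);
  assert (Rabs h < b - x) by (eapply Rlt_le_trans; [apply H1| apply Rmin_r]);
  assert (Hin : a <= x + h <= b) by (apply Rabs_def2 in H2; apply Rabs_def2 in H3; lra);
  specialize (H' h Hh Hin H0).
  - rewrite <- quo_fst by auto. eapply Rle_lt_trans; [apply fst_le_Cmod|]; auto.
  - rewrite <- quo_snd by auto. eapply Rle_lt_trans; [apply snd_le_Cmod|]; auto.
Qed.

Lemma dw_comp a b c d (f f1 : R -> C) (r r1 : R -> R) : deriv_within c d f f1 ->
  (forall x, a <= x <= b -> is_derive r x (r1 x)) ->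
  (forall x, a <= x <= b -> c <= r x <= d) ->
  (forall x y, a <= x <= b -> a <= y <= b -> r x = r y -> x = y) ->
  deriv_within a b (fun x => f (r x)) (fun x => Cmult (f1 (r x)) (RtoC (r1 x))).
Proof.
  intros Hf Hr Hrange Hinj. rewrite dw_lim in *. intros x Hx.
  set (K := fun h => r (x + h) - r x).
  assert (Hd := Hr x Hx). apply is_derive_Reals in Hd.
  assert (L2 : lim0 (dom a b x) (fun h => RtoC ((r (x+h) - r x)/h)) (RtoC (r1 x))).
  { apply lim0_RtoC. intros eps He. destruct (Hd eps He) as [dd Hdd].
    exists dd; split; [apply cond_pos|]. intros h [Hh _] Hhd. apply Hdd; auto. }
  assert (L1 : lim0 (dom a b x) (fun h => quo f (r x) (K h)) (f1 (r x))).
  { apply lim0_comp with (P := dom c d (r x)); [apply Hf; auto| |].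
    - intros h [Hh Hin]. split.
      + unfold K. intro E. apply Hh. assert (x + h = x); [|lra]. apply Hinj; auto. lra.
      + unfold K. replace (r x + (r (x + h) - r x)) with (r (x+h)) by ring. auto.
    - intros e He. destruct (Hd 1 Rlt_0_1) as [dd Hdd].
      set (M := Rabs (r1 x) + 1).
      assert (HM : 0 < M) by (unfold M; generalize (Rabs_pos (r1 x)); lra).
      exists (Rmin dd (e / M)). split; [apply Rmin_glb_lt; [apply cond_pos|apply Rdiv_lt_0_compat; auto]|].
      intros h [Hh _] Hhd.
      assert (Rabs h < dd) by (eapply Rlt_le_trans; [apply Hhd| apply Rmin_l]).
      assert (Rabs h < e / M) by (eapply Rlt_le_trans; [apply Hhd| apply Rmin_r]).
      specialize (Hdd h Hh H).
      unfold K. replace (r (x + h) - r x) with (((r (x + h) - r x) / h) * h) by (field; auto).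
      rewrite Rabs_mult.
      assert (Rabs ((r (x + h) - r x) / h) <= M).
      { unfold M. replace ((r (x + h) - r x) / h) with (((r (x + h) - r x) / h - r1 x) + r1 x) by ring.
        eapply Rle_trans; [apply Rabs_triang|]. lra. }
      apply Rmult_lt_compat_r with (r := M) in H0; auto.
      unfold Rdiv in H0. rewrite Rmult_assoc, Rinv_l in H0 by lra. rewrite Rmult_1_r in H0.
      generalize (Rabs_pos h) (Rabs_pos ((r (x + h) - r x) / h)). nra. }
  eapply lim0_ext; [|apply (lim0_mult _ _ _ _ _ L1 L2)].
  intros h [Hh Hin]. unfold quo, K.
  replace (r x + (r (x + h) - r x)) with (r (x+h)) by ring.
  assert (HK : r (x + h) - r x <> 0).
  { intro E. apply Hh. assert (x + h = x); [|lra]. apply Hinj; auto. lra. }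
  apply c_eq; csimpl; field; auto.
Qed.

Lemma sdt (G H : R -> R) a b y0 h2 : a < y0 < b -> (forall t, a < t < b -> is_derive G t (H t)) ->
  H y0 = 0 -> is_derive H y0 h2 -> 0 < h2 -> exists t, y0 < t < b /\ G y0 < G t.
Proof.
  intros Hy HG H0 HH Hh2. apply is_derive_Reals in HH.
  destruct (HH (h2/2)) as [d Hd]; [lra|].
  assert (Hpos : forall k, 0 < k < d -> 0 < H (y0 + k)).
  { intros k Hk. specialize (Hd k). rewrite H0 in Hd.
    assert (Rabs ((H (y0 + k) - 0) / k - h2) < h2/2) by (apply Hd; [lra| rewrite Rabs_right; lra]).
    apply Rabs_def2 in H1. destruct H1.
    assert (0 < (H (y0 + k) - 0) / k) by lra.
    replace (H (y0+k)) with (((H (y0 + k) - 0) / k) * k) by (field; lra).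
    apply Rmult_lt_0_compat; lra. }
  set (k := Rmin (d/2) ((b - y0)/2)).
  assert (Hk : 0 < k) by (apply Rmin_glb_lt; [generalize (cond_pos d)|]; lra).
  assert (Hk1 : k <= d/2) by apply Rmin_l. assert (Hk2 : k <= (b-y0)/2) by apply Rmin_r.
  destruct (MVT_cor2 G H y0 (y0 + k)) as [c [Hc1 Hc2]]; [lra| |].
  { intros c Hc. apply is_derive_Reals. apply HG. lra. }
  exists (y0 + k). split; [lra|].
  assert (0 < H c).
  { replace c with (y0 + (c - y0)) by ring. apply Hpos. generalize (cond_pos d); lra. }
  assert (0 < H c * (y0 + k - y0)) by (apply Rmult_lt_0_compat; lra). lra.
Qed.

Definition clamp a b x := Rmax a (Rmin b x).
Lemma clamp_in a b x : a <= b -> a <= clamp a b x <= b.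
Proof. intros. unfold clamp, Rmax, Rmin. repeat destruct Rle_dec; lra. Qed.
Lemma clamp_id a b x : a <= x <= b -> clamp a b x = x.
Proof. intros. unfold clamp, Rmax, Rmin. repeat destruct Rle_dec; lra. Qed.
Lemma clamp_lip a b x y : a <= b -> Rabs (clamp a b y - clamp a b x) <= Rabs (y - x).
Proof.
  intros. unfold clamp, Rmax, Rmin. unfold Rabs. repeat destruct Rle_dec; repeat destruct Rcase_abs; lra.
Qed.

Definition cw a b (G : R -> R) x := forall eps, 0 < eps -> exists d, 0 < d /\
  forall y, a <= y <= b -> Rabs (y - x) < d -> Rabs (G y - G x) < eps.

Lemma clamp_cont a b G : a <= b -> (forall x, a <= x <= b -> cw a b G x) ->
  forall x, continuity_pt (fun t => G (clamp a b t)) x.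
Proof.
  intros Hab Hc x. unfold continuity_pt, continue_in, limit1_in, limit_in. simpl. unfold R_dist.
  intros eps He. destruct (Hc (clamp a b x) (clamp_in a b x Hab) eps He) as [d [Hd H]].
  exists d. split; auto. intros y [_ Hy]. apply H; [apply clamp_in; auto|].
  eapply Rle_lt_trans; [apply clamp_lip; auto| auto].
Qed.

Lemma cont_cw a b G x : continuity_pt G x -> cw a b G x.
Proof.
  unfold continuity_pt, continue_in, limit1_in, limit_in. simpl. unfold R_dist.
  intros H eps He. destruct (H eps He) as [d [Hd H']]. exists d; split; auto.
  intros y _ Hy. destruct (Req_dec y x) as [E|E].
  - subst. rewrite Rminus_diag, Rabs_R0. auto.
  - apply H'. split; auto. unfold D_x, no_cond. split; auto.
Qed.

Lemma isd_eq (f : R -> R) (x a b : R) : is_derive f x a -> a = b -> is_derive f x b.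
Proof. intros; subst; auto. Qed.
Lemma isd_mult (f g : R -> R) (x a b : R) : is_derive f x a -> is_derive g x b ->
  is_derive (fun t => f t * g t) x (a * g x + f x * b).
Proof. intros. exact (is_derive_mult f g x a b H H0 Rmult_comm). Qed.
Lemma isd_plus (f g : R -> R) (x a b : R) : is_derive f x a -> is_derive g x b ->
  is_derive (fun t => f t + g t) x (a + b).
Proof. intros. exact (is_derive_plus f g x a b H H0). Qed.
Lemma isd_minus (f g : R -> R) (x a b : R) : is_derive f x a -> is_derive g x b ->
  is_derive (fun t => f t - g t) x (a - b).
Proof. intros. exact (is_derive_minus f g x a b H H0). Qed.
Lemma isd_const (c x : R) : is_derive (fun _ => c) x 0.
Proof. exact (is_derive_const c x). Qed.
Lemma isd_id (x : R) : is_derive (fun t => t) x 1.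
Proof. exact (is_derive_id x). Qed.

Ltac isd_build hyps := repeat first [ apply isd_mult | apply isd_plus | apply isd_minus | apply isd_id | apply isd_const | hyps ].

Lemma key_alg (y p q p1 q1 p2 q2 m b s : R) :
 -1 < y < 1 -> 2 <= m -> 0 < 2*m - 3 - b^2 - 2*Rabs s ->
 (m*m - b*b - m)*p - (m*b + b*m - b)*q + (2*m*y + 2*s)*p1 - 2*b*y*q1 + (y^2-1)*p2 = 0 ->
 (m*m - b*b - m)*q + (m*b + b*m - b)*p + (2*m*y+2*s)*q1 + 2*b*y*p1 + (y^2-1)*q2 = 0 ->
 -2*y*(p^2+q^2) + (1-y^2)*(2*(p*p1+q*q1)) = 0 ->
 0 < p^2 + q^2 ->
 0 < -2*(p^2+q^2) - 4*y*(2*(p*p1+q*q1)) + (1-y^2)*(2*(p1^2+q1^2+p*p2+q*q2)).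
Proof.
  intros Hy Hm Hk ERe EIm HH HF.
  set (F := p^2+q^2) in *. set (a := p*p1+q*q1) in *. set (t := p*q1 - q*p1).
  set (R2 := p*p2+q*q2). set (W := 1 - y^2). set (A := m*m-m-b*b).
  assert (HW : 0 < W) by (unfold W; nra).
  assert (E1 : W*R2 = (2*m*y+2*s)*a - 2*b*y*t + A*F).
  { assert (Z : p*((m*m - b*b - m)*p - (m*b + b*m - b)*q + (2*m*y + 2*s)*p1 - 2*b*y*q1 + (y^2-1)*p2)
              + q*((m*m - b*b - m)*q + (m*b + b*m - b)*p + (2*m*y+2*s)*q1 + 2*b*y*p1 + (y^2-1)*q2) = 0)
      by (rewrite ERe, EIm; ring).
    unfold W, R2, a, t, A, F. lra. }
  assert (E2 : F*(p1^2+q1^2) = a^2 + t^2) by (unfold F, a, t; ring).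
  assert (E3 : W*a = y*F) by (unfold W; lra).
  assert (Hf : 0 < (A-1)*W + y^2*(2*m-3-b^2) + 2*s*y).
  { assert (A - 1 >= 2*m-3-b^2) by (unfold A; nra).
    assert (2*s*y >= - 2*Rabs s).
    { destruct (Rcase_abs s); [rewrite Rabs_left by auto | rewrite Rabs_right by auto]; nra. }
    assert (W + y^2 = 1) by (unfold W; ring). nra. }
  set (h2 := -2*F - 4*y*(2*a) + W*(2*(p1^2+q1^2+R2))).
  assert (Key : F*W*h2 = 2*(W*t - b*y*F)^2 + 2*F^2*((A-1)*W + y^2*(2*m-3-b^2) + 2*s*y)).
  { unfold h2.
    replace (F*W*(-2*F - 4*y*(2*a) + W*(2*(p1^2+q1^2+R2)))) with
      (-2*W*F^2 - 8*y*F*(W*a) + 2*W^2*(F*(p1^2+q1^2)) + 2*W*F*(W*R2)) by ring.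
    rewrite E2, E1.
    replace (2*W^2*(a^2+t^2)) with (2*(W*a)^2 + 2*W^2*t^2) by ring.
    replace (2 * W * F * ((2 * m * y + 2 * s) * a - 2 * b * y * t + A * F)) with
      (2 * F * ((2 * m * y + 2 * s) * (W*a)) - 4*b*y*t*W*F + 2*W*A*F^2) by ring.
    rewrite E3. ring. }
  assert (0 < F*W*h2).
  { rewrite Key. assert (0 < F^2) by nra. assert (0 < F^2 * ((A-1)*W + y^2*(2*m-3-b^2) + 2*s*y)) by (apply Rmult_lt_0_compat; auto). assert (0 <= (W*t - b*y*F)^2) by apply pow2_ge_0. lra. }
  assert (0 < h2).
  { destruct (Rlt_or_le 0 h2); auto. assert (F*W*h2 <= 0); [|lra].
    assert (0 < F*W) by nra. nra. }
  unfold h2, R2 in *. lra.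
Qed.

Lemma Cmod2 (z : C) : Cmod z * Cmod z = fst z * fst z + snd z * snd z.
Proof. unfold Cmod. rewrite sqrt_sqrt; [ring| nra]. Qed.

Lemma cw_end (u u1 : R -> C) e : deriv_within (-1) 1 u u1 -> (e = 1 \/ e = -1) ->
  cw (-1) 1 (fun t => (1 - t*t) * (fst (u t) * fst (u t) + snd (u t) * snd (u t))) e.
Proof.
  intros Hd He. rewrite dw_lim in Hd.
  assert (Hein : -1 <= e <= 1) by (destruct He; subst; lra).
  assert (L := dw_cont _ _ _ _ _ Hein (Hd e Hein)).
  intros eps Heps. destruct (L 1 Rlt_0_1) as [d0 [Hd0 H0]].
  set (B := Cmod (u e) + 1).
  assert (HB : 0 < B) by (unfold B; generalize (Cmod_ge_0 (u e)); lra).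
  set (d := Rmin d0 (eps / (2*(B*B) + 1))).
  assert (Hpos : 0 < 2*(B*B)+1) by nra.
  exists d. split; [apply Rmin_glb_lt; [auto| apply Rdiv_lt_0_compat; auto]|].
  intros y Hy Hye.
  assert (Hyd0 : Rabs (y - e) < d0) by (eapply Rlt_le_trans; [apply Hye|apply Rmin_l]).
  assert (Hyd1 : Rabs (y - e) < eps / (2*(B*B) + 1)) by (eapply Rlt_le_trans; [apply Hye|apply Rmin_r]).
  assert (Ee : 1 - e*e = 0) by (destruct He; subst; lra).
  rewrite Ee, Rmult_0_l, Rminus_0_r.
  destruct (Req_dec y e) as [Eq|Neq].
  { subst. rewrite Ee, Rmult_0_l, Rabs_R0. auto. }
  specialize (H0 (y - e)). replace (e + (y - e)) with y in H0 by ring.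
  assert (Hc : Cmod (Cminus (u y) (u e)) < 1) by (apply H0; [split; [lra|lra]| auto]).
  assert (Huy : Cmod (u y) < B).
  { unfold B. replace (u y) with (Cplus (Cminus (u y) (u e)) (u e)) by ring.
    eapply Rle_lt_trans; [apply Cmod_triangle|]. lra. }
  rewrite <- Cmod2.
  assert (0 <= Cmod (u y)) by apply Cmod_ge_0.
  assert (HW : 0 <= 1 - y*y <= 2 * Rabs (y - e)).
  { destruct He; subst; unfold Rabs; destruct Rcase_abs; split; nra. }
  assert (Hm : Cmod (u y) * Cmod (u y) <= B*B) by nra.
  rewrite Rabs_right by nra.
  assert ((1 - y*y) * (Cmod (u y) * Cmod (u y)) <= 2 * Rabs (y - e) * (B*B)).
  { apply Rmult_le_compat; nra. }
  assert (Rabs (y-e) * (2*(B*B)+1) < eps).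
  { apply Rmult_lt_compat_r with (r := 2*(B*B)+1) in Hyd1; auto.
    unfold Rdiv in Hyd1. rewrite Rmult_assoc, Rinv_l in Hyd1 by lra. lra. }
  generalize (Rabs_pos (y - e)). nra.
Qed.


Definition ode s (mu : C) (u u1 u2 : R -> C) y :=
  Cplus (Cplus (Cmult (Cminus (Cmult mu mu) mu) (u y))
               (Cmult (Cplus (Cmult (RtoC 2) (Cmult mu (RtoC y))) (RtoC (2*s))) (u1 y)))
        (Cmult (RtoC (y^2-1)) (u2 y)).

Lemma maxp s (mu : C) (u u1 u2 : R -> C) :
  deriv_within (-1) 1 u u1 -> deriv_within (-1) 1 u1 u2 ->
  2 <= fst mu -> 0 < 2*fst mu - 3 - (snd mu)^2 - 2*Rabs s ->
  (forall y, -1 <= y <= 1 -> ode s mu u u1 u2 y = RtoC 0) ->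
  forall y, -1 <= y <= 1 -> u y = RtoC 0.
Proof.
  intros Hu Hu1 Hm Hk Hode.
  pose (G := fun t => (1 - t*t) * (fst (u t) * fst (u t) + snd (u t) * snd (u t))).
  pose (H := fun t => (-2*t) * (fst (u t) * fst (u t) + snd (u t) * snd (u t))
               + (1 - t*t) * (2*(fst (u t) * fst (u1 t) + snd (u t) * snd (u1 t)))).
  assert (HG : forall t, -1 < t < 1 -> is_derive G t (H t)).
  { intros t Ht. destruct (dw_re _ _ _ _ t Hu Ht) as [Hp Hq].
    pose proof (isd_plus _ _ _ _ _ (isd_mult _ _ _ _ _ Hp Hp) (isd_mult _ _ _ _ _ Hq Hq)) as DF.
    pose proof (isd_minus _ _ _ _ _ (isd_const 1 t) (isd_mult _ _ _ _ _ (isd_id t) (isd_id t))) as DW.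
    pose proof (isd_mult _ _ _ _ _ DW DF) as Fin.
    unfold G. eapply isd_eq. exact Fin. unfold H. cbv beta. ring. }
  assert (Int : forall y, -1 < y < 1 -> u y = RtoC 0).
  { intros y1 Hy1. destruct (Req_dec (Cmod (u y1)) 0) as [Z|NZ]; [apply Cmod_eq_0; auto|].
    exfalso.
    assert (HP1 : 0 < G y1).
    { unfold G. rewrite <- Cmod2. assert (0 < Cmod (u y1)) by (generalize (Cmod_ge_0 (u y1)); lra).
      apply Rmult_lt_0_compat; nra. }
    assert (Hcw : forall x, -1 <= x <= 1 -> cw (-1) 1 G x).
    { intros x Hx. destruct (Req_dec x 1) as [E1|E1]; [apply cw_end with (u1 := u1); auto|].
      destruct (Req_dec x (-1)) as [E2|E2]; [apply cw_end with (u1 := u1); auto|].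
      apply cont_cw. apply derivable_continuous_pt. exists (H x). apply is_derive_Reals. apply HG. lra. }
    destruct (continuity_ab_maj (fun t => G (clamp (-1) 1 t)) (-1) 1) as [Mx [HMx HMxin]]; [lra| |].
    { intros c _. apply clamp_cont; auto. lra. }
    assert (Hmax : forall t, -1 <= t <= 1 -> G t <= G Mx).
    { intros t Ht. specialize (HMx t Ht). rewrite !clamp_id in HMx by auto. auto. }
    assert (HGy : G y1 <= G Mx) by (apply Hmax; lra).
    assert (HMi : -1 < Mx < 1).
    { assert (G1 : G 1 = 0) by (unfold G; ring). assert (Gm1 : G (-1) = 0) by (unfold G; ring).
      destruct HMxin as [A1 A2]. split.
      - destruct (Rle_lt_or_eq_dec _ _ A1) as [B|B]; auto. rewrite <- B in HGy. lra.
      - destruct (Rle_lt_or_eq_dec _ _ A2) as [B|B]; auto. rewrite B in HGy. lra. }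
    assert (HH0 : H Mx = 0).
    { assert (pr : derivable_pt G Mx) by (exists (H Mx); apply is_derive_Reals; apply HG; auto).
      pose proof (deriv_maximum G (-1) 1 Mx pr (proj1 HMi) (proj2 HMi)) as DM.
      rewrite <- DM.
      - unfold derive_pt. destruct pr as [l Hl]. simpl.
        apply (uniqueness_limite G Mx). apply is_derive_Reals. apply HG; auto. auto.
      - intros x Hx1 Hx2. apply Hmax. lra. }
    assert (HF : 0 < fst (u Mx) ^2 + snd (u Mx)^2).
    { assert (0 < G Mx) by lra. unfold G in H0.
      destruct (Rlt_or_le 0 (fst (u Mx) ^2 + snd (u Mx)^2)); auto.
      assert (0 <= 1 - Mx*Mx) by nra. nra. }
    destruct (dw_re _ _ _ _ Mx Hu HMi) as [Hp Hq].
    destruct (dw_re _ _ _ _ Mx Hu1 HMi) as [Hp1 Hq1].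
    set (h2 := -2*(fst (u Mx) ^2 + snd (u Mx)^2) - 4*Mx*(2*(fst (u Mx)*fst (u1 Mx) + snd (u Mx)*snd (u1 Mx)))
       + (1-Mx^2)*(2*(fst (u1 Mx)^2 + snd (u1 Mx)^2 + fst (u Mx) * fst (u2 Mx) + snd (u Mx) * snd (u2 Mx)))).
    assert (HH : is_derive H Mx h2).
    { pose proof (isd_mult _ _ _ _ _ (isd_const (-2) Mx) (isd_id Mx)) as Dm2t.
      pose proof (isd_plus _ _ _ _ _ (isd_mult _ _ _ _ _ Hp Hp) (isd_mult _ _ _ _ _ Hq Hq)) as DF.
      pose proof (isd_minus _ _ _ _ _ (isd_const 1 Mx) (isd_mult _ _ _ _ _ (isd_id Mx) (isd_id Mx))) as DW.
      pose proof (isd_mult _ _ _ _ _ (isd_const 2 Mx) (isd_plus _ _ _ _ _ (isd_mult _ _ _ _ _ Hp Hp1) (isd_mult _ _ _ _ _ Hq Hq1))) as Da.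
      pose proof (isd_plus _ _ _ _ _ (isd_mult _ _ _ _ _ Dm2t DF) (isd_mult _ _ _ _ _ DW Da)) as Fin.
      unfold H. eapply isd_eq. exact Fin. unfold h2. cbv beta. ring. }
    assert (Hh2 : 0 < h2).
    { assert (E := Hode Mx (conj (Rlt_le _ _ (proj1 HMi)) (Rlt_le _ _ (proj2 HMi)))).
      unfold ode in E.
      assert (ERe := f_equal fst E). assert (EIm := f_equal snd E).
      destruct mu as [m b]. simpl in Hm, Hk.
      unfold Cminus, Cplus, Cmult, Copp, RtoC in ERe, EIm; simpl in ERe, EIm.
      unfold h2. apply key_alg with (m := m) (b := b) (s := s).
      + exact HMi.
      + exact Hm.
      + exact Hk.
      + rewrite <- ERe; ring.
      + rewrite <- EIm; ring.
      + transitivity (H Mx); [unfold H; ring | exact HH0].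
      + eapply Rlt_le_trans; [exact HF| right; ring]. }
    destruct (sdt G H (-1) 1 Mx h2 HMi HG HH0 HH Hh2) as [t [Ht Hlt]].
    assert (G t <= G Mx) by (apply Hmax; lra). lra. }
  intros y Hy.
  destruct (Rle_lt_or_eq_dec _ _ (proj1 Hy)) as [A1|A1];
    [destruct (Rle_lt_or_eq_dec _ _ (proj2 Hy)) as [A2|A2]; [apply Int; lra|]|].
  all: (apply Cmod_eq_0; apply Rle_antisym; [|apply Cmod_ge_0]; apply Rnot_lt_le; intro Hp;
    rewrite dw_lim in Hu; assert (L := dw_cont _ _ _ _ _ Hy (Hu y Hy));
    destruct (L _ Hp) as [d [Hd Hd']]).
  - specialize (Hd' (- Rmin (d/2) 1)). rewrite Int in Hd'.
    2:{ generalize (Rmin_r (d/2) 1) (Rmin_glb_lt (d/2) 1 0 ltac:(lra) ltac:(lra)). intros. subst. lra. }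
    replace (Cminus (RtoC 0) (u y)) with (Copp (u y)) in Hd' by ring. rewrite Cmod_opp in Hd'.
    assert (Cmod (u y) < Cmod (u y)); [|lra].
    generalize (Rmin_r (d/2) 1) (Rmin_l (d/2) 1) (Rmin_glb_lt (d/2) 1 0 ltac:(lra) ltac:(lra)). intros.
    apply Hd'. split; subst; lra. rewrite Rabs_left; lra.
  - specialize (Hd' (Rmin (d/2) 1)). rewrite Int in Hd'.
    2:{ generalize (Rmin_r (d/2) 1) (Rmin_glb_lt (d/2) 1 0 ltac:(lra) ltac:(lra)). intros. subst. lra. }
    replace (Cminus (RtoC 0) (u y)) with (Copp (u y)) in Hd' by ring. rewrite Cmod_opp in Hd'.
    assert (Cmod (u y) < Cmod (u y)); [|lra].
    generalize (Rmin_r (d/2) 1) (Rmin_l (d/2) 1) (Rmin_glb_lt (d/2) 1 0 ltac:(lra) ltac:(lra)). intros.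
    apply Hd'. split; subst; lra. rewrite Rabs_right; lra.
Qed.

Lemma dw_RtoC a b (r r1 : R -> R) : (forall x, a <= x <= b -> is_derive r x (r1 x)) ->
  deriv_within a b (fun x => RtoC (r x)) (fun x => RtoC (r1 x)).
Proof.
  intros H. apply dw_full. intros x Hx. split.
  - simpl. exact (H x Hx).
  - simpl. exact (isd_const 0 x).
Qed.

Definition mu (lam : C) (n : nat) : C := Cplus lam (RtoC (INR n)).

Lemma En_deriv s lam (D : nat -> R -> C) n : deriv_tower (-1) 1 D ->
  deriv_within (-1) 1 (fun y => ode s (mu lam n) (D n) (D (S n)) (D (S (S n))) y)
                      (fun y => ode s (mu lam (S n)) (D (S n)) (D (S (S n))) (D (S (S (S n)))) y).
Proof.
  intros HD.
  set (m := mu lam n).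
  pose proof (dw_mult _ _ _ _ _ _ (dw_const (-1) 1 (Cminus (Cmult m m) m)) (HD n)) as T0.
  pose proof (dw_plus _ _ _ _ _ _ (dw_mult _ _ _ _ _ _ (dw_const (-1) 1 (RtoC 2)) (dw_mult _ _ _ _ _ _ (dw_const (-1) 1 m) (dw_id (-1) 1)))
       (dw_const (-1) 1 (RtoC (2*s)))) as C1.
  pose proof (dw_mult _ _ _ _ _ _ C1 (HD (S n))) as T1.
  assert (C2 : deriv_within (-1) 1 (fun x => RtoC (x^2 - 1)) (fun x => RtoC (2*x))).
  { apply dw_RtoC. intros x _. auto_derive; auto. ring. }
  pose proof (dw_mult _ _ _ _ _ _ C2 (HD (S (S n)))) as T2.
  pose proof (dw_plus _ _ _ _ _ _ (dw_plus _ _ _ _ _ _ T0 T1) T2) as Fin.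
  eapply dw_ext; [| |exact Fin].
  - intros x _. unfold ode. reflexivity.
  - intros x _. unfold ode, m, mu. rewrite S_INR. apply c_eq; csimpl; ring.
Qed.

Lemma En_all s lam (D : nat -> R -> C) : deriv_tower (-1) 1 D ->
  (forall y, -1 <= y <= 1 -> ode s (mu lam 0) (D 0%nat) (D 1%nat) (D 2%nat) y = RtoC 0) ->
  forall n y, -1 <= y <= 1 -> ode s (mu lam n) (D n) (D (S n)) (D (S (S n))) y = RtoC 0.
Proof.
  intros HD H0 n. induction n as [|n IH]; auto.
  apply (dw_zero (-1) 1 _ _ ltac:(lra) (En_deriv s lam D n HD)). auto.
Qed.

Lemma Cmult_neq0 (a b : C) : a <> RtoC 0 -> b <> RtoC 0 -> Cmult a b <> RtoC 0.
Proof.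
  intros Ha Hb E. apply (f_equal Cmod) in E. rewrite Cmod_mult, Cmod_0 in E.
  apply Cmod_gt_0 in Ha. apply Cmod_gt_0 in Hb. nra.
Qed.

Lemma Cmult_eq0_r (a b : C) : a <> RtoC 0 -> Cmult a b = RtoC 0 -> b = RtoC 0.
Proof.
  intros Ha E. apply Cmod_eq_0. apply (f_equal Cmod) in E. rewrite Cmod_mult, Cmod_0 in E.
  apply Cmod_gt_0 in Ha. generalize (Cmod_ge_0 b). nra.
Qed.

Lemma part2_gen s lam (D : nat -> R -> C) : -1 < fst lam -> lam <> RtoC 0 -> lam <> RtoC 1 ->
  deriv_tower (-1) 1 D ->
  (forall y, -1 <= y <= 1 -> ode s lam (D 0%nat) (D 1%nat) (D 2%nat) y = RtoC 0) ->
  forall y, -1 <= y <= 1 -> D 0%nat y = RtoC 0.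
Proof.
  intros Hre H0 H1 HD Hode.
  assert (Hmu0 : mu lam 0 = lam) by (unfold mu; apply c_eq; simpl; ring).
  assert (HE := En_all s lam D HD ltac:(rewrite Hmu0; exact Hode)).
  destruct (INR_unbounded (2 + 3 + (snd lam)^2 + 2*Rabs s + Rabs (fst lam))) as [N HN].
  assert (Big : forall n, (N <= n)%nat -> forall y, -1 <= y <= 1 -> D n y = RtoC 0).
  { intros n Hn. apply maxp with (s := s) (mu := mu lam n) (u1 := D (S n)) (u2 := D (S (S n))).
    - apply HD. - apply HD.
    - unfold mu. simpl. apply le_INR in Hn. generalize (Rle_abs (fst lam)) (pow2_ge_0 (snd lam)) (Rabs_pos s). lra.
    - unfold mu. simpl. apply le_INR in Hn. rewrite Rplus_0_r.
      generalize (Rle_abs (- fst lam)) (pow2_ge_0 (snd lam)) (Rabs_pos s). rewrite Rabs_Ropp. lra.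
    - apply HE. }
  assert (Hnz : forall j, Cminus (Cmult (mu lam j) (mu lam j)) (mu lam j) <> RtoC 0).
  { intros j. replace (Cminus (Cmult (mu lam j) (mu lam j)) (mu lam j)) with (Cmult (mu lam j) (Cminus (mu lam j) (RtoC 1))) by ring.
    apply Cmult_neq0.
    - intro E. unfold mu in E. destruct lam as [l1 l2]. injection E; intros E2 E1.
      simpl in Hre. assert (INR j < 1) by lra.
      destruct j as [|j]; [|rewrite S_INR in H; generalize (pos_INR j); lra].
      simpl in E1. apply H0. apply c_eq; simpl; lra.
    - intro E. unfold mu in E. destruct lam as [l1 l2]. injection E; intros E2 E1.
      simpl in Hre. assert (INR j < 2) by lra.
      destruct j as [|[|j]].
      + simpl in E1. apply H1. apply c_eq; simpl; lra.
      + simpl in E1. apply H0. apply c_eq; simpl; lra.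
      + rewrite !S_INR in H. generalize (pos_INR j); lra. }
  assert (Down : forall k j, (j + k = N)%nat -> forall y, -1 <= y <= 1 -> D j y = RtoC 0 /\ D (S j) y = RtoC 0).
  { induction k as [|k IH]; intros j Hjk y Hy.
    - split; apply Big; auto; lia.
    - destruct (IH (S j) ltac:(lia) y Hy) as [A1 A2].
      split; auto.
      assert (E := HE j y Hy). unfold ode in E. rewrite A1, A2 in E.
      apply (Cmult_eq0_r _ _ (Hnz j)).
      rewrite <- E. ring. }
  intros y Hy. apply (Down N 0%nat); auto.
Qed.

Lemma part1 (s : R) (lam : C) : -1 < fst lam -> lam <> RtoC 0 -> lam <> RtoC 1 ->
  forall (psi : R -> C) (D : nat -> R -> C),
     smooth_on_with 0 1 psi D ->
     (forall z, 0 <= z <= 1 ->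
        Cminus
          (Cplus (Cmult (RtoC (z * (1 - z))) (D 2%nat z))
                 (Cmult (Cminus (Cminus lam (RtoC s))
                                (Cmult (RtoC 2) (Cmult lam (RtoC z))))
                        (D 1%nat z)))
          (Cmult (Cmult lam (Cminus lam (RtoC 1))) (D 0%nat z)) = RtoC 0) ->
     forall z, 0 <= z <= 1 -> psi z = RtoC 0.
Proof.
  intros Hre H0 H1 psi D [HD0 HD] Heq.
  set (D' := fun n y => Cmult (RtoC ((/2)^n)) (D n ((y+1)/2))).
  assert (HT : deriv_tower (-1) 1 D').
  { intros n.
    assert (Hc : deriv_within (-1) 1 (fun y => D n ((y+1)/2)) (fun y => Cmult (D (S n) ((y+1)/2)) (RtoC (/2)))).
    { apply (dw_comp (-1) 1 0 1 (D n) (D (S n)) (fun y => (y+1)/2) (fun _ => /2)); auto.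
      - intros x _. auto_derive; auto. field.
      - intros x Hx. lra.
      - intros x y _ _ E. lra. }
    pose proof (dw_mult _ _ _ _ _ _ (dw_const (-1) 1 (RtoC ((/2)^n))) Hc) as Fin.
    eapply dw_ext; [| |exact Fin].
    - intros x _. unfold D'. reflexivity.
    - intros x _. unfold D'. simpl pow. apply c_eq; csimpl; ring. }
  assert (Hode : forall y, -1 <= y <= 1 -> ode s lam (D' 0%nat) (D' 1%nat) (D' 2%nat) y = RtoC 0).
  { intros y Hy. specialize (Heq ((y+1)/2) ltac:(lra)).
    unfold ode, D'. simpl pow.
    unfold Cminus, Cplus, Cmult, Copp, RtoC in Heq. simpl in Heq. injection Heq as Ha Hb.
    apply c_eq; csimpl.
    - match goal with |- ?X = 0 => match type of Ha with ?A = 0 => replace X with (-A) by field; rewrite Ha; ring end end.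
    - match goal with |- ?X = 0 => match type of Hb with ?A = 0 => replace X with (-A) by field; rewrite Hb; ring end end. }
  intros z Hz. rewrite <- HD0 by auto.
  assert (E := part2_gen s lam D' Hre H0 H1 HT Hode (2*z-1) ltac:(lra)).
  unfold D' in E. replace ((2*z-1+1)/2) with z in E by field.
  simpl pow in E. rewrite <- E. apply c_eq; csimpl; ring.
Qed.

Definition cpw (x : R) (z : C) : C :=
  (exp (fst z * ln x) * cos (snd z * ln x), exp (fst z * ln x) * sin (snd z * ln x)).

Lemma exp_m1 a L : exp ((a - 1) * L) = exp (a * L) * / exp L.
Proof. replace ((a-1)*L) with (a*L + - L) by ring. rewrite exp_plus, exp_Ropp. auto. Qed.

Lemma cpw_step x z : 0 < x -> cpw x (Cminus z (RtoC 1)) = Cmult (cpw x z) (RtoC (/ x)).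
Proof.
  intros Hx. unfold cpw. assert (E := exp_m1 (fst z) (ln x)). rewrite exp_ln in E by auto.
  destruct z as [z1 z2]. simpl in E. apply c_eq; csimpl;
  replace (z1 + - (1)) with (z1 - 1) by ring; replace (z2 + - 0) with z2 by ring; rewrite E; ring.
Qed.

Lemma cpw_der (s : R) (z : C) Y : Y < s ->
  is_derive (fun Y => fst (cpw (s - Y) z)) Y (fst (Cmult (Copp z) (cpw (s - Y) (Cminus z (RtoC 1))))) /\
  is_derive (fun Y => snd (cpw (s - Y) z)) Y (snd (Cmult (Copp z) (cpw (s - Y) (Cminus z (RtoC 1))))).
Proof.
  intros H. rewrite cpw_step by lra. destruct z as [z1 z2]. unfold cpw. simpl fst; simpl snd.
  split; auto_derive; try (repeat split; lra); change (s + - Y) with (s - Y); csimpl; field; lra.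
Qed.

Definition Ej s lam j Y := cpw (s - Y) (Copp (mu lam j)).

Lemma mu_S lam j : Cminus (Copp (mu lam j)) (RtoC 1) = Copp (mu lam (S j)).
Proof. unfold mu. rewrite S_INR. apply c_eq; csimpl; ring. Qed.

Lemma Ej_der s lam j : 1 < s -> deriv_within (-1) 1 (Ej s lam j) (fun Y => Cmult (mu lam j) (Ej s lam (S j) Y)).
Proof.
  intros Hs. apply dw_full. intros x Hx. destruct (cpw_der s (Copp (mu lam j)) x ltac:(lra)) as [H1 H2].
  rewrite mu_S in H1, H2. unfold Ej.
  replace (Copp (Copp (mu lam j))) with (mu lam j) in H1, H2 by ring. split; auto.
Qed.

Lemma Ej_step s lam j Y : Y < s -> Ej s lam (S j) Y = Cmult (Ej s lam j Y) (RtoC (/(s-Y))).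
Proof. intros. unfold Ej. rewrite <- mu_S. apply cpw_step. lra. Qed.

Definition rr s Y := (s*Y - 1)/(s - Y).

Definition term := (C * nat * nat)%type.
Fixpoint evalT s lam (D : nat -> R -> C) (l : list term) (Y : R) : C :=
  match l with
  | nil => RtoC 0
  | (c, j, k) :: l' => Cplus (Cmult c (Cmult (Ej s lam j Y) (D k (rr s Y)))) (evalT s lam D l' Y)
  end.
Fixpoint derivT s lam (l : list term) : list term :=
  match l with
  | nil => nil
  | (c, j, k) :: l' => (Cmult c (mu lam j), S j, k) :: (Cmult c (RtoC (s*s-1)), S (S j), S k) :: derivT s lam l'
  end.
Definition Tn s lam n := Nat.iter n (derivT s lam) ((RtoC 1, 0%nat, 0%nat) :: nil).
Definition Dpsi s lam D n := evalT s lam D (Tn s lam n).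

Lemma rr_der s Y : Y < s -> is_derive (rr s) Y ((s*s-1)/((s-Y)*(s-Y))).
Proof. intros. unfold rr. auto_derive; [lra|]. field. lra. Qed.

Lemma rr_range s Y : 1 < s -> -1 <= Y <= 1 -> -1 <= rr s Y <= 1.
Proof.
  intros Hs HY. unfold rr. assert (0 < s - Y) by lra. split.
  - apply (Rmult_le_reg_r (s - Y)); auto. unfold Rdiv. rewrite Rmult_assoc, Rinv_l by lra. nra.
  - apply (Rmult_le_reg_r (s - Y)); auto. unfold Rdiv. rewrite Rmult_assoc, Rinv_l by lra. nra.
Qed.

Lemma rr_inj s x y : 1 < s -> -1 <= x <= 1 -> -1 <= y <= 1 -> rr s x = rr s y -> x = y.
Proof.
  intros Hs Hx Hy E. unfold rr in E.
  assert (E2 : (s*x - 1)*(s - y) = (s*y-1)*(s-x)).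
  { replace (s*x-1) with ((s*x-1)/(s-x)*(s-x)) by (field; lra).
    replace (s*y-1) with ((s*y-1)/(s-y)*(s-y)) by (field; lra). rewrite E. ring. }
  assert ((s*s-1)*(x - y) = 0) by nra.
  apply Rmult_integral in H. destruct H; nra.
Qed.

Lemma term_der s lam (D : nat -> R -> C) c j k : 1 < s -> deriv_tower (-1) 1 D ->
  deriv_within (-1) 1 (fun Y => Cmult c (Cmult (Ej s lam j Y) (D k (rr s Y))))
    (fun Y => Cplus (Cmult (Cmult c (mu lam j)) (Cmult (Ej s lam (S j) Y) (D k (rr s Y))))
                    (Cmult (Cmult c (RtoC (s*s-1))) (Cmult (Ej s lam (S (S j)) Y) (D (S k) (rr s Y))))).
Proof.
  intros Hs HD.
  pose proof (dw_comp (-1) 1 (-1) 1 (D k) (D (S k)) (rr s) (fun Y => (s*s-1)/((s-Y)*(s-Y))) (HD k)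
     (fun x Hx => rr_der s x ltac:(lra)) (fun x Hx => rr_range s x Hs Hx) (fun x y Hx Hy => rr_inj s x y Hs Hx Hy)) as Hc.
  pose proof (dw_mult _ _ _ _ _ _ (dw_const (-1) 1 c) (dw_mult _ _ _ _ _ _ (Ej_der s lam j Hs) Hc)) as Fin.
  eapply dw_ext; [| |exact Fin].
  - intros; reflexivity.
  - intros x Hx. rewrite (Ej_step s lam (S j) x) by lra. rewrite (Ej_step s lam j x) by lra.
    apply c_eq; csimpl; field; lra.
Qed.

Lemma evalT_der s lam (D : nat -> R -> C) l : 1 < s -> deriv_tower (-1) 1 D ->
  deriv_within (-1) 1 (evalT s lam D l) (evalT s lam D (derivT s lam l)).
Proof.
  intros Hs HD. induction l as [|[[c j] k] l IH].
  - simpl. apply dw_const.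
  - simpl. pose proof (dw_plus _ _ _ _ _ _ (term_der s lam D c j k Hs HD) IH) as Fin.
    eapply dw_ext; [| |exact Fin].
    + intros; reflexivity.
    + intros; simpl. ring.
Qed.

Lemma Dpsi_tower s lam D : 1 < s -> deriv_tower (-1) 1 D -> deriv_tower (-1) 1 (Dpsi s lam D).
Proof.
  intros Hs HD n. unfold Dpsi. replace (Tn s lam (S n)) with (derivT s lam (Tn s lam n)).
  - apply evalT_der; auto.
  - unfold Tn. simpl. reflexivity.
Qed.

Lemma Ej_nz s lam j Y : Ej s lam j Y <> RtoC 0.
Proof.
  unfold Ej, cpw. generalize (fst (Copp (mu lam j))) (snd (Copp (mu lam j))) (ln (s - Y)).
  intros a b L E. injection E; intros E2 E1.
  apply Rmult_integral in E1. apply Rmult_integral in E2.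
  pose proof (exp_pos (a * L)).
  pose proof (sin2_cos2 (b * L)). unfold Rsqr in H0.
  destruct E1 as [E1|E1]; [lra|]. destruct E2 as [E2|E2]; [lra|]. rewrite E1, E2 in H0. lra.
Qed.

Lemma part3_gen (alpha s : R) (lam : C) : alpha = s*s - 1 -> 1 < s ->
  -1 < fst lam -> lam <> RtoC 0 -> lam <> RtoC 1 ->
  forall (D : nat -> R -> C), deriv_tower (-1) 1 D ->
     (forall y, -1 <= y <= 1 ->
        Cplus
          (Cplus (Cmult (Cplus (Cmult lam lam) lam) (D 0%nat y))
                 (Cmult (Cplus (Cmult (Cplus (Cmult (RtoC 2) lam) (RtoC 2)) (RtoC y))
                               (RtoC (2 * alpha / (s + y))))
                        (D 1%nat y)))
          (Cmult (RtoC (y ^ 2 - 1)) (D 2%nat y)) = RtoC 0) ->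
     forall y, -1 <= y <= 1 -> D 0%nat y = RtoC 0.
Proof.
  intros Hal Hs Hre H0 H1 D HD HL. subst alpha.
  assert (Hode : forall Y, -1 <= Y <= 1 -> ode s lam (Dpsi s lam D 0%nat) (Dpsi s lam D 1%nat) (Dpsi s lam D 2%nat) Y = RtoC 0).
  { intros Y HY. assert (Ht : 0 < s - Y) by lra.
    specialize (HL (rr s Y) (rr_range s Y Hs HY)).
    unfold ode, Dpsi, Tn. simpl.
    rewrite !(Ej_step s lam _ Y) by lra.
    set (E0 := Ej s lam 0 Y) in *. clearbody E0.
    set (w := / (s - Y)) in *.
    assert (Hw : 0 < w) by (unfold w; apply Rinv_0_lt_compat; lra).
    assert (HY' : Y = s - / w) by (unfold w; rewrite Rinv_inv; ring).
    assert (Hy : rr s Y = (s*s-1)*w - s) by (unfold rr, w; field; lra).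
    assert (Hq : 2 * (s*s-1) / (s + rr s Y) = 2 * / w).
    { rewrite Hy. assert (0 < (s*s-1)*w) by (apply Rmult_lt_0_compat; nra). field. repeat split; try lra; nra. }
    rewrite Hq in HL. rewrite Hy in HL |- *.
    clearbody w. subst Y.
    generalize (D 0%nat ((s * s - 1) * w - s)) (D 1%nat ((s * s - 1) * w - s)) (D 2%nat ((s * s - 1) * w - s)) HL.
    clear HL. intros P0 P1 P2 HL.
    transitivity (Cmult (Cmult E0 (RtoC ((s*s-1)*w*w))) (Cplus
          (Cplus (Cmult (Cplus (Cmult lam lam) lam) P0)
                 (Cmult (Cplus (Cmult (Cplus (Cmult (RtoC 2) lam) (RtoC 2)) (RtoC ((s*s-1)*w - s)))
                               (RtoC (2 * / w)))
                        P1))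
          (Cmult (RtoC (((s*s-1)*w - s) ^ 2 - 1)) P2))).
    2:{ rewrite HL. ring. }
    unfold mu. simpl INR.
    repeat first [rewrite RtoC_minus | rewrite RtoC_mult | rewrite RtoC_plus | rewrite RtoC_pow].
    rewrite !(RtoC_inv w) by lra.
    field. intro E. apply (f_equal fst) in E. simpl in E. lra. }
  assert (HZ := part2_gen s lam (Dpsi s lam D) Hre H0 H1 (Dpsi_tower s lam D Hs HD) Hode).
  intros y Hy.
  set (Y := (1 + s*y)/(s + y)).
  assert (HY : -1 <= Y <= 1).
  { unfold Y. assert (0 < s + y) by lra. split.
    - apply (Rmult_le_reg_r (s + y)); auto. unfold Rdiv. rewrite Rmult_assoc, Rinv_l by lra. nra.
    - apply (Rmult_le_reg_r (s + y)); auto. unfold Rdiv. rewrite Rmult_assoc, Rinv_l by lra. nra. }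
  assert (Hr : rr s Y = y).
  { unfold rr, Y. field. split; [lra|nra]. }
  specialize (HZ Y HY). unfold Dpsi, Tn in HZ. simpl in HZ. rewrite Hr in HZ.
  apply (Cmult_eq0_r (Ej s lam 0 Y)); [apply Ej_nz|].
  rewrite <- HZ. ring.
Qed.

Theorem mainTheorem5 (alpha : R) (lam : C) :
  0 < alpha -> -1 < Re lam -> lam <> RtoC 0 -> lam <> RtoC 1 ->
  (* hypergeometric form on [0,1] *)
  (forall (psi : R -> C) (D : nat -> R -> C),
     smooth_on_with 0 1 psi D ->
     (forall z, 0 <= z <= 1 ->
        Cminus
          (Cplus (Cmult (RtoC (z * (1 - z))) (D 2%nat z))
                 (Cmult (Cminus (Cminus lam (RtoC (sqrt (1 + alpha))))
                                (Cmult (RtoC 2) (Cmult lam (RtoC z))))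
                        (D 1%nat z)))
          (Cmult (Cmult lam (Cminus lam (RtoC 1))) (D 0%nat z)) = RtoC 0) ->
     forall z, 0 <= z <= 1 -> psi z = RtoC 0) /\
  (* equivalent form on [-1,1] *)
  (forall (psi : R -> C) (D : nat -> R -> C),
     smooth_on_with (-1) 1 psi D ->
     (forall y, -1 <= y <= 1 ->
        Cplus
          (Cplus (Cmult (Cminus (Cmult lam lam) lam) (D 0%nat y))
                 (Cmult (Cplus (Cmult (RtoC 2) (Cmult lam (RtoC y)))
                               (RtoC (2 * sqrt (1 + alpha))))
                        (D 1%nat y)))
          (Cmult (RtoC (y ^ 2 - 1)) (D 2%nat y)) = RtoC 0) ->
     forall y, -1 <= y <= 1 -> psi y = RtoC 0) /\
  (* consequence *)
  (forall (phi : R -> C) (D : nat -> R -> C),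
     smooth_on_with (-1) 1 phi D ->
     (forall y, -1 <= y <= 1 ->
        Cplus
          (Cplus (Cmult (Cplus (Cmult lam lam) lam) (D 0%nat y))
                 (Cmult (Cplus (Cmult (Cplus (Cmult (RtoC 2) lam) (RtoC 2)) (RtoC y))
                               (RtoC (2 * alpha / (sqrt (1 + alpha) + y))))
                        (D 1%nat y)))
          (Cmult (RtoC (y ^ 2 - 1)) (D 2%nat y)) = RtoC 0) ->
     forall y, -1 <= y <= 1 -> phi y = RtoC 0).
Proof.
  intros Hal Hre H0 H1.
  assert (Hs : 1 < sqrt (1 + alpha)).
  { apply Rle_lt_trans with (sqrt 1); [rewrite sqrt_1; lra | apply sqrt_lt_1_alt; lra]. }
  assert (Hal' : alpha = sqrt (1 + alpha) * sqrt (1 + alpha) - 1).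
  { rewrite sqrt_sqrt by lra. ring. }
  unfold Re in Hre.
  split; [|split].
  - apply (part1 (sqrt (1 + alpha)) lam); auto.
  - intros psi D [HD0 HD] Heq z Hz. rewrite <- HD0 by auto.
    apply (part2_gen (sqrt (1 + alpha)) lam D Hre H0 H1 HD); auto.
  - intros phi D [HD0 HD] Heq y Hy. rewrite <- HD0 by auto.
    apply (part3_gen alpha (sqrt (1 + alpha)) lam Hal' Hs Hre H0 H1 D HD); auto.
Qed.
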